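(* For the linear regression for classification (LRC) problem $\min_{D}\|F-D\tilde{A}\|_F^2$, when the ideal graph condition for classification is satisfied, the fitting error achieves the minimum value, $\epsilon=1$, and the spectral risk is \[ \gamma=1+\frac{\bar{\zeta}}{\beta}, \] with \[ 1+\frac{1}{\zeta_\rho |\cos \theta_u|}\leq \gamma \leq 1+\frac{\zeta_\rho}{|\cos \theta_u|}. \]
   Context: Let $A=[A_1,\dots,A_n]\in\mathbb{R}^{p\times n}$ be a mean-removed data matrix ($A\mathbf{1}=\mathbf{0}$) and $F=[F_1,\dots,F_n]\in\mathbb{R}^{K\times n}$ the class indicator matrix ($F_i$ has a one in the entry of the class of sample $i$ and zeros elsewhere). Define $\beta\doteq-\min_{ij}(A^TA)_{ij}$ (which is positive) and the augmented data matrix $\tilde{A}=\begin{bmatrix}\sqrt{\beta}\mathbf{1}^T\\ A\end{bmatrix}$, assumed to have rank $p+1$, so that the LRC solution is $D^*=F\tilde{A}^T(\tilde{A}\tilde{A}^T)^{-1}$. Let $W\doteq\tilde{A}^T\tilde{A}$ (nonnegative by the choice of $\beta$). The ideal graph condition for classification holds if $W_{ij}=0$ whenever $F_i\neq F_j$. The (relative) fitting error is $\epsilon\doteq\|F-D^*\tilde{A}\|_F^2/\|D^*\tilde{A}\|_F^2+1$ and the (relative) spectral risk is $\gamma\doteq\|D^*\|_F^2\|\tilde{A}\|_F^2/\|D^*\tilde{A}\|_F^2$. Let $\bar{\zeta}\doteq\|A\|_F^2/n$ be the mean squared length of the original data, $\zeta_\rho\doteq\max_i\|A_i\|_2^2/\min_i\|A_i\|_2^2$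 the ratio between maximum and minimum squared lengths, and $\theta_u$ the maximum included angle between pairs of original data vectors $A_i,A_j$. *)

(* Defs.v *)
From HB Require Import structures.
From mathcomp Require Import all_boot all_order all_algebra.
From mathcomp Require Import reals trigo.
Set Implicit Arguments. Unset Strict Implicit. Unset Printing Implicit Defensive.
Import Order.TTheory GRing.Theory Num.Theory.
Local Open Scope ring_scope.

Section LRC.
Variable R : realType.

(* minimum / maximum of f over the x : T satisfying P (0 if there is none) *)
Definition fminP (T : finType) (P : pred T) (f : T -> R) : R :=
  match [pick x | P x] with
  | Some x0 => \big[Num.min/f x0]_(x | P x) f x
  | None => 0 end.
Definition fmaxP (T : finType) (P : pred T) (f : T -> R) : R :=
  match [pick x | P x] with
  | Some x0 => \big[Num.max/f x0]_(x | P x) f x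
  | None => 0 end.

Definition frob2 m n (M : 'M[R]_(m, n)) : R := \sum_i \sum_j M i j ^+ 2.

(* squared Euclidean length of the i-th column (sample) of A *)
Definition colsq p n (A : 'M[R]_(p, n)) (i : 'I_n) : R := \sum_k A k i ^+ 2.

Definition indicator K n (lab : 'I_n -> 'I_K) : 'M[R]_(K, n) :=
  \matrix_(k, i) (lab i == k)%:R.

Definition beta p n (A : 'M[R]_(p, n)) : R :=
  - fminP predT (fun ij : 'I_n * 'I_n => (A^T *m A) ij.1 ij.2).

Definition Atilde p n (A : 'M[R]_(p, n)) : 'M[R]_(1 + p, n) :=
  col_mx (const_mx (Num.sqrt (beta A))) A.

Definition Dstar K p n (F : 'M[R]_(K, n)) (A : 'M[R]_(p, n)) : 'M[R]_(K, 1 + p) :=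
  F *m (Atilde A)^T *m invmx (Atilde A *m (Atilde A)^T).

Definition Wgraph p n (A : 'M[R]_(p, n)) : 'M[R]_n := (Atilde A)^T *m Atilde A.

Definition ideal_graph K p n (F : 'M[R]_(K, n)) (A : 'M[R]_(p, n)) : Prop :=
  forall i j : 'I_n, col i F != col j F -> Wgraph A i j = 0.

Definition fit_err K p n (F : 'M[R]_(K, n)) (A : 'M[R]_(p, n)) : R :=
  frob2 (F - Dstar F A *m Atilde A) / frob2 (Dstar F A *m Atilde A) + 1.

Definition spec_risk K p n (F : 'M[R]_(K, n)) (A : 'M[R]_(p, n)) : R :=
  frob2 (Dstar F A) * frob2 (Atilde A) / frob2 (Dstar F A *m Atilde A).

Definition zeta_bar p n (A : 'M[R]_(p, n)) : R := frob2 A / n%:R.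

Definition zeta_rho p n (A : 'M[R]_(p, n)) : R :=
  fmaxP predT (colsq A) / fminP predT (colsq A).

Definition angle p n (A : 'M[R]_(p, n)) (i j : 'I_n) : R :=
  acos ((A^T *m A) i j / (Num.sqrt (colsq A i) * Num.sqrt (colsq A j))).

Definition theta_u p n (A : 'M[R]_(p, n)) : R :=
  fmaxP (fun ij : 'I_n * 'I_n => ij.1 != ij.2) (fun ij => angle A ij.1 ij.2).

End LRC.

(* Main.v *)
Require Import Defs.
From HB Require Import structures.
From mathcomp Require Import all_boot all_order all_algebra.
From mathcomp Require Import reals trigo.
Import Order.TTheory GRing.Theory Num.Theory.
Local Open Scope ring_scope.
From mathcomp Require Import ring lra.
Section Helpers.
Variable R : realType.

Lemma fminP_le (T : finType) (P : pred T) (f : T -> R) z :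
  P z -> fminP P f <= f z.
Proof.
move=> Pz; rewrite /fminP; case: pickP => [x0 Px0|/(_ z)]; last by rewrite Pz.
by rewrite (bigD1 z) //= ge_min lexx.
Qed.

Lemma fmaxP_ge (T : finType) (P : pred T) (f : T -> R) z :
  P z -> f z <= fmaxP P f.
Proof.
move=> Pz; rewrite /fmaxP; case: pickP => [x0 Px0|/(_ z)]; last by rewrite Pz.
by rewrite (bigD1 z) //= le_max lexx.
Qed.

Lemma fminP_ex (T : finType) (P : pred T) (f : T -> R) z :
  P z -> exists2 y, P y & fminP P f = f y.
Proof.
move=> Pz; rewrite /fminP; case: pickP => [x0 Px0|/(_ z)]; last by rewrite Pz.
elim/big_ind: _ => //; first by exists x0.
- move=> a b [y1 P1 ->] [y2 P2 ->]; rewrite minEle; case: ifP => _.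
  by exists y1. by exists y2.
- by move=> i Pi; exists i.
Qed.

Lemma fmaxP_ex (T : finType) (P : pred T) (f : T -> R) z :
  P z -> exists2 y, P y & fmaxP P f = f y.
Proof.
move=> Pz; rewrite /fmaxP; case: pickP => [x0 Px0|/(_ z)]; last by rewrite Pz.
elim/big_ind: _ => //; first by exists x0.
- move=> a b [y1 P1 ->] [y2 P2 ->]; rewrite maxEle; case: ifP => _.
  by exists y2. by exists y1.
- by move=> i Pi; exists i.
Qed.

Lemma frob2_tr m k (M : 'M[R]_(m, k)) : frob2 M = \tr (M *m M^T).
Proof.
rewrite /frob2 /mxtrace; apply: eq_bigr => i _; rewrite mxE.
by apply: eq_bigr => j _; rewrite mxE expr2.
Qed.

End Helpers.
Lemma partA (R : realType) (K p n : nat) (A : 'M[R]_(p, n))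
    (lab : 'I_n -> 'I_K) :
  A *m const_mx 1 = 0 :> 'cV[R]_p ->
  (forall i : 'I_n, col i A != 0) ->
  \rank (Atilde A) = (1 + p)%N ->
  ideal_graph (indicator R lab) A ->
  let F := indicator R lab in
  let gam := spec_risk F A in
  [/\ (0 < n)%N, 0 < beta A, fit_err F A = 1 & gam = 1 + zeta_bar A / beta A].
Proof.
move=> A1 colnz rk ideal. move=> F. move=> gam.
set At := Atilde A; set G := A^T *m A; set b := beta A.
have n0 : (0 < n)%N by have := rank_leq_col At; rewrite rk; apply: leq_trans (leq_addr p 1).
have Gii i : G i i = colsq A i.
  by rewrite /G /colsq mxE; apply: eq_bigr => k _; rewrite mxE expr2.
have s_gt0 i : 0 < colsq A i.
  rewrite lt_def sumr_ge0 ?andbT => [|k _]; last exact: sqr_ge0.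
  apply: contra (colnz i) => /eqP s0; apply/eqP/matrixP => k j.
  rewrite !mxE; apply/eqP; rewrite -sqrf_eq0; apply/eqP.
  by apply: (psumr_eq0P _ s0) => // l _; exact: sqr_ge0.
have Gsym i j : G i j = G j i.
  by rewrite /G !mxE; apply: eq_bigr => k _; rewrite !mxE mulrC.
have Gsum i : \sum_j G i j = 0.
  have : (A^T *m (A *m (const_mx 1 : 'cV[R]_n))) i 0 = 0 by rewrite A1 mulmx0 mxE.
  rewrite mulmxA mxE => h; rewrite -[RHS]h; apply: eq_bigr => j _.
  by rewrite !mxE mulr1.
have [[k l] _ bkl] := @fminP_ex R _ predT (fun ij : 'I_n * 'I_n => (A^T *m A) ij.1 ij.2)
   (Ordinal n0, Ordinal n0) isT.
have bmin i j : - G i j <= b.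
  by rewrite /b /beta lerN2 (@fminP_le R _ predT
    (fun ij : 'I_n * 'I_n => (A^T *m A) ij.1 ij.2) (i, j)).
have b_gt0 : 0 < b.
  rewrite ltNge; apply/negP => b0.
  pose i0 := Ordinal n0.
  have Gge0 j : 0 <= G i0 j by rewrite -lerN2 oppr0 (le_trans (bmin _ _) b0).
  have := psumr_eq0P (fun j _ => Gge0 j) (Gsum i0) (i := i0) isT.
  by rewrite Gii => /eqP; rewrite gt_eqF.
have b_ge0 : 0 <= b by exact: ltW.
have Wij i j : Wgraph A i j = b + G i j.
  rewrite /Wgraph /At /Atilde mxE big_split_ord /= big_ord1.
  have trE m1 m2 (M : 'M[R]_(m1, m2)) x y : M^T x y = M y x by rewrite mxE.
  rewrite !trE !col_mxEu !mxE -expr2 sqr_sqrtr //; congr (_ + _).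
  by apply: eq_bigr => q _; rewrite !trE !(col_mxEd _ A).
have labF i j : lab i != lab j -> Wgraph A i j = 0.
  move=> hij; apply: ideal; apply/negP => /eqP h.
  have := congr1 (fun M : 'M[R]_(K, 1) => M (lab i) 0) h.
  rewrite !mxE eqxx eq_sym (negbTE hij) => /eqP; by rewrite oner_eq0.
have FW : F *m Wgraph A = (n%:R * b) *: F.
  apply/matrixP => q i; rewrite !mxE.
  have [hq|hq] := eqVneq (lab i) q.
  - rewrite mulr1.
    transitivity (\sum_j Wgraph A j i).
      apply: eq_bigr => j _; rewrite /F mxE.
      have [_|hj] := eqVneq (lab j) q; first by rewrite mul1r.
      by rewrite mul0r labF // hq.
    under eq_bigr do rewrite Wij Gsym.
    by rewrite big_split /= Gsum addr0 sumr_const card_ord mulr_natl.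
  - rewrite mulr0; apply: big1 => j _; rewrite /F mxE.
    have [hj|hj] := eqVneq (lab j) q; last by rewrite mul0r.
    by rewrite mul1r labF // hj eq_sym.
have WE : Wgraph A = At^T *m At := erefl.
have rfAt : row_free At by rewrite /row_free rk.
have Mu : At *m At^T \in unitmx.
  rewrite -row_free_unit /row_free.
  have kz : kermx (At *m At^T) = 0.
    apply/row_matrixP => i; rewrite row0.
    set u := row i _.
    have uM : u *m (At *m At^T) = 0 by rewrite -row_mul mulmx_ker row0.
    have h : (u *m At) *m (u *m At)^T = 0.
      by rewrite trmx_mul mulmxA -(mulmxA u) uM mul0mx.
    have uAt : u *m At = 0.
      have := congr1 (fun X : 'M[R]_1 => X 0 0) h; rewrite !mxE => h2.
      have hge : forall k', predT k' -> 0 <= (u *m At) 0 k' * (u *m At)^T k' 0.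
        by move=> k' _; rewrite [X in _ * X]mxE -expr2 sqr_ge0.
      apply/matrixP => a j; rewrite ord1 [RHS]mxE.
      have := psumr_eq0P hge h2 (i := j) isT.
      by rewrite [X in _ * X = _]mxE -expr2 => /eqP; rewrite sqrf_eq0 => /eqP.
    by apply/eqP; rewrite -(mulmx_free_eq0 _ rfAt) uAt.
  have := mxrank_ker (At *m At^T); rewrite kz mxrank0 => /esym/eqP.
  rewrite subn_eq0 => h; apply/eqP/anti_leq; by rewrite h rank_leq_row.
have nb0 : n%:R * b != 0 by rewrite mulf_neq0 // ?pnatr_eq0 -?lt0n ?gt_eqF.
have Dst : Dstar F A = (n%:R * b)^-1 *: (F *m At^T).
  have e : F *m At^T = (n%:R*b)^-1 *: (F *m At^T *m (At *m At^T)).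
    by rewrite !mulmxA -(mulmxA F At^T At) -WE FW -scalemxAl scalerA mulVf // scale1r.
  by rewrite /Dstar -/At {1}e -scalemxAl mulmxK.
have DA : Dstar F A *m At = F.
  by rewrite Dst -scalemxAl -mulmxA -WE FW scalerA mulVf // scale1r.
have fF : frob2 F = n%:R.
  rewrite /frob2 exchange_big /= -[n in n%:R]card_ord -sumr_const.
  apply: eq_bigr => i _; rewrite (bigD1 (lab i)) //= big1 ?addr0.
    by rewrite mxE eqxx expr1n.
  by move=> q hq; rewrite mxE eq_sym (negbTE hq) expr0n.
have fD : frob2 (Dstar F A) = b^-1.
  rewrite frob2_tr Dst.
  have trZ (c : R) m1 m2 (X : 'M[R]_(m1, m2)) : (c *: X)^T = c *: X^T.
    by apply/matrixP => ? ?; rewrite !mxE.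
  rewrite trZ -scalemxAl -scalemxAr scalerA mxtraceZ trmx_mul trmxK.
  rewrite mulmxA -(mulmxA F) -WE FW -scalemxAl mxtraceZ -frob2_tr fF.
  by field; rewrite -?lt0n ?pnatr_eq0 ?gt_eqF.
have fAt : frob2 At = n%:R * b + frob2 A.
  rewrite /frob2 big_split_ord big_ord1 /=; congr (_ + _).
    transitivity (\sum_(j < n) b); last by rewrite sumr_const card_ord mulr_natl.
    by apply: eq_bigr => j _; rewrite /At /Atilde (col_mxEu _ A) mxE sqr_sqrtr.
  by apply: eq_bigr => i _; apply: eq_bigr => j _; rewrite /At /Atilde (col_mxEd _ A).
split => //.
  by rewrite /fit_err DA subrr /frob2 big1 ?mul0r ?add0r // => i _; rewrite big1 // => j _; rewrite mxE expr0n.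
rewrite /gam /spec_risk DA fD -/At fAt fF /zeta_bar -/b.
by field; rewrite -?lt0n ?pnatr_eq0 ?gt_eqF.
Qed.
Lemma acos_anti (R : realType) (x y : R) : -1 <= x <= 1 -> -1 <= y <= 1 ->
  acos x <= acos y -> y <= x.
Proof.
move=> hx hy hxy; rewrite leNgt; apply/negP => yx.
have ix : acos x \in `[0, pi] by rewrite in_itv /= acos_ge0 // acos_lepi.
have iy : acos y \in `[0, pi] by rewrite in_itv /= acos_ge0 // acos_lepi.
have := ltr_cos iy ix.
rewrite !acosK ?in_itv //= yx => /esym h.
by move: hxy; rewrite leNgt h.
Qed.

Lemma sum_sq_pm (R : realType) (I : finType) (f g : I -> R) (sg : R) :
  \sum_q (f q + sg * g q) ^+ 2 =
  \sum_q f q ^+ 2 + 2 * sg * \sum_q f q * g q + sg ^+ 2 * \sum_q g q ^+ 2.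
Proof.
rewrite !mulr_sumr -!big_split /=; apply: eq_bigr => q _; ring.
Qed.

Lemma cs_bound (R : realType) p (u v : 'I_p -> R) :
  0 < \sum_q u q ^+ 2 -> 0 < \sum_q v q ^+ 2 ->
  -1 <= (\sum_q u q * v q) / (Num.sqrt (\sum_q u q ^+ 2) * Num.sqrt (\sum_q v q ^+ 2)) <= 1.
Proof.
move=> su sv.
set a := Num.sqrt (\sum_q u q ^+ 2); set d := Num.sqrt (\sum_q v q ^+ 2).
set c := (\sum_q u q * v q) / _.
have a0 : 0 < a by rewrite sqrtr_gt0.
have d0 : 0 < d by rewrite sqrtr_gt0.
have e (sg : R) : \sum_q (u q / a + sg * (v q / d)) ^+ 2 = 1 + 2 * sg * c + sg ^+ 2.
  rewrite sum_sq_pm.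
  have -> : \sum_q (u q / a) ^+ 2 = 1.
    under eq_bigr do rewrite expr_div_n.
    by rewrite -mulr_suml sqr_sqrtr ?divff ?gt_eqF // ltW.
  have -> : \sum_q (v q / d) ^+ 2 = 1.
    under eq_bigr do rewrite expr_div_n.
    by rewrite -mulr_suml sqr_sqrtr ?divff ?gt_eqF // ltW.
  have -> : \sum_q u q / a * (v q / d) = c.
    rewrite /c mulr_suml; apply: eq_bigr => q _.
    by field; rewrite !gt_eqF.
  by rewrite mulr1.
have h1 := e 1; have h2 := e (-1).
have g1 : 0 <= \sum_q (u q / a + 1 * (v q / d)) ^+ 2 by apply: sumr_ge0 => q _; exact: sqr_ge0.
have g2 : 0 <= \sum_q (u q / a + (-1) * (v q / d)) ^+ 2 by apply: sumr_ge0 => q _; exact: sqr_ge0.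
rewrite h1 in g1; rewrite h2 in g2.
apply/andP; split; nra.
Qed.

Lemma partB (R : realType) (p n : nat) (A : 'M[R]_(p, n)) :
  (forall i : 'I_n, col i A != 0) -> (0 < n)%N -> 0 < beta A ->
  1 + 1 / (zeta_rho A * `|cos (theta_u A)|) <= 1 + zeta_bar A / beta A /\
  1 + zeta_bar A / beta A <= 1 + zeta_rho A / `|cos (theta_u A)|.
Proof.
move=> colnz n0 b_gt0.
set G := A^T *m A; set b := beta A; set s := colsq A.
have b_pos : 0 < b := b_gt0.
have Gii i : G i i = s i.
  by rewrite /G /s /colsq mxE; apply: eq_bigr => k _; rewrite mxE expr2.
have s_gt0 i : 0 < s i.
  rewrite lt_def sumr_ge0 ?andbT => [|k _]; last exact: sqr_ge0.
  apply: contra (colnz i) => /eqP s0; apply/eqP/matrixP => k j.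
  rewrite !mxE; apply/eqP; rewrite -sqrf_eq0; apply/eqP.
  by apply: (psumr_eq0P _ s0) => // l _; exact: sqr_ge0.
have [[k l] _ bkl] := @fminP_ex R _ predT (fun ij : 'I_n * 'I_n => (A^T *m A) ij.1 ij.2)
   (Ordinal n0, Ordinal n0) isT.
have bE : b = - G k l by rewrite /b /beta bkl.
have bmin i j : - G i j <= b.
  by rewrite /b /beta lerN2 (@fminP_le R _ predT
    (fun ij : 'I_n * 'I_n => (A^T *m A) ij.1 ij.2) (i, j)).
have kl : k != l.
  apply/eqP => e; move: b_pos; rewrite bE e Gii oppr_gt0 ltNge.
  by rewrite ltW.
pose c i j := G i j / (Num.sqrt (s i) * Num.sqrt (s j)).
have angE i j : angle A i j = acos (c i j) by [].
have cs i j : -1 <= c i j <= 1.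
  have := @cs_bound R p (fun q => A q i) (fun q => A q j) (s_gt0 i) (s_gt0 j).
  suff -> : \sum_q A q i * A q j = G i j by [].
  by rewrite /G mxE; apply: eq_bigr => q _; rewrite mxE.
have sq_gt0 i : 0 < Num.sqrt (s i) by rewrite sqrtr_gt0.
have GE i j : G i j = c i j * (Num.sqrt (s i) * Num.sqrt (s j)).
  by rewrite /c mulfVK // mulf_neq0 // gt_eqF.
have [[i0 j0] /= ij0 thE] := @fmaxP_ex R _ (fun ij : 'I_n * 'I_n => ij.1 != ij.2)
   (fun ij => angle A ij.1 ij.2) (k, l) kl.
have thE' : theta_u A = angle A i0 j0 := thE.
have thge : angle A k l <= theta_u A.
  exact: (@fmaxP_ge R _ (fun ij : 'I_n * 'I_n => ij.1 != ij.2)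
   (fun ij => angle A ij.1 ij.2) (k, l) kl).
have cosE : cos (theta_u A) = c i0 j0 by rewrite thE' angE acosK // in_itv /=.
have cle : c i0 j0 <= c k l.
  by apply: acos_anti => //; rewrite -angE -angE -thE'.
have ckl : c k l < 0.
  have := b_pos; rewrite bE GE oppr_gt0 => h.
  by rewrite -(pmulr_rlt0 _ (mulr_gt0 (sq_gt0 k) (sq_gt0 l))) mulrC.
set t := `|cos (theta_u A)|.
have tE : t = - c i0 j0 by rewrite /t cosE ltr0_norm // (le_lt_trans cle ckl).
have t_gt0 : 0 < t by rewrite tE oppr_gt0 (le_lt_trans cle ckl).
set smin := fminP predT s; set smax := fmaxP predT s.
have smin_le i : smin <= s i by exact: fminP_le.
have smax_ge i : s i <= smax by exact: fmaxP_ge.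
have smin_gt0 : 0 < smin.
  by have [y _ e] := @fminP_ex R _ predT s (Ordinal n0) isT; rewrite /smin e.
have smax_gt0 : 0 < smax by apply: lt_le_trans (smax_ge (Ordinal n0)).
have prod_le i j : Num.sqrt (s i) * Num.sqrt (s j) <= smax.
  rewrite -[smax]sqr_sqrtr; last exact: ltW.
  by rewrite expr2; apply: ler_pM; rewrite ?sqrtr_ge0 // ler_sqrt ?smax_ge // ltW.
have prod_ge i j : smin <= Num.sqrt (s i) * Num.sqrt (s j).
  rewrite -[smin]sqr_sqrtr; last exact: ltW.
  by rewrite expr2; apply: ler_pM; rewrite ?sqrtr_ge0 // ler_sqrt ?smin_le // ltW.
have b_le : b <= t * smax.
  rewrite bE GE tE.
  have := prod_le k l; have := sq_gt0 k; have := sq_gt0 l; nra.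
have b_ge : smin * t <= b.
  apply: le_trans (bmin i0 j0); rewrite GE tE.
  have := prod_ge i0 j0; nra.
have zE : zeta_bar A = (\sum_i s i) / n%:R.
  rewrite /zeta_bar /frob2 exchange_big /=; congr (_ / _).
have n_gt0 : 0 < n%:R :> R by rewrite ltr0n.
have z_ge : smin <= zeta_bar A.
  rewrite zE ler_pdivlMr // mulr_natr -[n in _ *+ n]card_ord -sumr_const.
  by apply: ler_sum => i _.
have z_le : zeta_bar A <= smax.
  rewrite zE ler_pdivrMr // mulr_natr -[n in _ *+ n]card_ord -sumr_const.
  by apply: ler_sum => i _.
set z := zeta_bar A.
have rhoE : zeta_rho A = smax / smin by [].
rewrite rhoE; split; rewrite lerD2l.
- have -> : 1 / (smax / smin * t) = smin / (t * smax).
    by field; rewrite !gt_eqF.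
  apply: (@le_trans _ _ (smin / b)).
    by rewrite ler_pM2l // lef_pV2 ?posrE ?mulr_gt0.
  by rewrite ler_pM2r ?invr_gt0.
- have -> : smax / smin / t = smax / (smin * t).
    by field; rewrite !gt_eqF.
  apply: (@le_trans _ _ (smax / b)).
    by rewrite ler_pM2r ?invr_gt0.
  by rewrite ler_pM2l // lef_pV2 ?posrE ?mulr_gt0.
Qed.

Theorem theorem6 (R : realType) (K p n : nat) (A : 'M[R]_(p, n))
    (lab : 'I_n -> 'I_K) :
  A *m const_mx 1 = 0 :> 'cV[R]_p ->
  (forall i : 'I_n, col i A != 0) ->
  \rank (Atilde A) = (1 + p)%N ->
  ideal_graph (indicator R lab) A ->
  let F := indicator R lab in
  let gam := spec_risk F A in
  fit_err F A = 1 /\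
  gam = 1 + zeta_bar A / beta A /\
  1 + 1 / (zeta_rho A * `|cos (theta_u A)|) <= gam /\
  gam <= 1 + zeta_rho A / `|cos (theta_u A)|.
Proof.
move=> A1 colnz rk ideal F gam.
have [n0 b0 fe ge] := @partA R K p n A lab A1 colnz rk ideal.
have [l1 l2] := @partB R p n A colnz n0 b0.
have gE : gam = 1 + zeta_bar A / beta A := ge.
clearbody gam; subst gam.
exact: (conj fe (conj (erefl _) (conj l1 l2))).
Qed.
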